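(* Let $E=(C,V)$ be an approval election with $C$ nonempty and $V$ nonempty. Then $\mathrm{av\text{-}agr}(E)=1$ if and only if $E$ is an identity election, and $\mathrm{av\text{-}agr}(E)=0$ if and only if every candidate $c\in C$ is approved by exactly half of the voters, i.e. $|A(c)|=|V|/2$ for all $c\in C$.
   Context: An (approval) election is a pair $E=(C,V)$ where $C=\{c_1,\dots,c_m\}$ is a set of candidates and $V=(v_1,\dots,v_n)$ is a collection (with possible repetitions) of voters; each vote $v_i$ is a binary vector in $\{0,1\}^m$, with $v_i[j]=1$ meaning voter $v_i$ approves $c_j$. For a candidate $c$, $A(c)$ is the set of voters approving $c$. An identity election is one in which all votes are identical (all voters approve the same set of candidates). The Approval Agreement index is $\mathrm{av\text{-}agr}(E)=\frac{1}{|C|}\sum_{c\in C}\left|1-2\frac{|A(c)|}{|V|}\right|$. *)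

(* Defs.v *)
From mathcomp Require Import all_boot all_order all_algebra.
Set Implicit Arguments. Unset Strict Implicit. Unset Printing Implicit Defensive.
Import Order.TTheory GRing.Theory Num.Theory.
Local Open Scope ring_scope.

(* An approval election with m candidates ('I_m) and n voters ('I_n);
   voter i approves candidate j iff  E i j = true.
   Voters are indexed (so repetitions of identical votes are allowed). *)
Definition election (m n : nat) := {ffun 'I_n -> {ffun 'I_m -> bool}}.

Definition approvers m n (E : election m n) (c : 'I_m) : {set 'I_n} :=
  [set v | E v c].

Definition identity_election m n (E : election m n) : Prop :=
  forall v w : 'I_n, E v = E w.

Definition av_agr m n (E : election m n) : rat :=
  (m%:R)^-1 * \sum_(c < m) `| 1 - 2 * ((#|approvers E c|)%:R / n%:R) |.

(* Main.v *)
Require Import Defs.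
From mathcomp Require Import all_boot all_order all_algebra.
From mathcomp Require Import lra zify.
Import Order.TTheory GRing.Theory Num.Theory.
Local Open Scope ring_scope.

Lemma card_le {m n} (E : election m n) c : (#|approvers E c| <= n)%N.
Proof. by rewrite -[X in (_ <= X)%N]card_ord max_card. Qed.

Lemma t_bounds {m n} (E : election m n) c : (0 < n)%N ->
  0 <= (#|approvers E c|)%:R / (n%:R : rat) <= 1.
Proof.
move=> hn; have hn' : (0 : rat) < n%:R by rewrite ltr0n.
apply/andP; split; first by rewrite divr_ge0 // ler0n.
by rewrite ler_pdivrMr // mul1r ler_nat card_le.
Qed.

Lemma x_bounds {m n} (E : election m n) c : (0 < n)%N ->
  0 <= `|1 - 2 * ((#|approvers E c|)%:R / (n%:R : rat))| <= 1.
Proof.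
move=> hn; have /andP[h0 h1] := t_bounds E c hn.
set t := _ / _ in h0 h1 *.
rewrite normr_ge0 /=; rewrite ler_norml; apply/andP; split; lra.
Qed.

Lemma x_eq1 {m n} (E : election m n) c : (0 < n)%N ->
  `|1 - 2 * ((#|approvers E c|)%:R / (n%:R : rat))| = 1 <->
  (#|approvers E c| = 0 \/ #|approvers E c| = n)%N.
Proof.
move=> hn; have hn' : (n%:R : rat) != 0 by rewrite pnatr_eq0 -lt0n.
have /andP[h0 h1] := t_bounds E c hn.
split.
- set t := _ / _ in h0 h1 *.
  have [hy|hy] := lerP 0 (1 - 2 * t).
  + rewrite ger0_norm // => h; left.
    have : t = 0 by lra.
    rewrite /t => /eqP; rewrite mulf_eq0 invr_eq0 (negbTE hn') orbF pnatr_eq0.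
    by move/eqP.
  + rewrite ltr0_norm // => h; right.
    have : t = 1 by lra.
    rewrite /t => ht; apply/eqP; rewrite -(eqr_nat rat).
    by rewrite -(divfK hn' (#|approvers E c|)%:R) ht mul1r.
- case=> ->; first by rewrite mul0r mulr0 subr0 normr1.
  rewrite divff // mulr1; lra.
Qed.

Lemma x_eq0 {m n} (E : election m n) c : (0 < n)%N ->
  `|1 - 2 * ((#|approvers E c|)%:R / (n%:R : rat))| = 0 <->
  (#|approvers E c|)%:R = (n%:R : rat) / 2.
Proof.
move=> hn; have hn' : (n%:R : rat) != 0 by rewrite pnatr_eq0 -lt0n.
split.
- move/eqP; rewrite normr_eq0 subr_eq0 => /eqP h.
  have ht : (#|approvers E c|)%:R / (n%:R : rat) = 1 / 2 by lra.
  by rewrite -(divfK hn' (#|approvers E c|)%:R) ht mul1r mulrC.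
- move=> ->; rewrite mulrAC divff // mul1r; lra.
Qed.

Theorem proposition1 (m n : nat) (E : election m n) :
  (0 < m)%N -> (0 < n)%N ->
  (av_agr E = 1 <-> identity_election E) /\
  (av_agr E = 0 <->
     forall c : 'I_m, (#|approvers E c|)%:R = (n%:R : rat) / 2).
Proof.
move=> hm hn.
have hm' : (m%:R : rat) != 0 by rewrite pnatr_eq0 -lt0n.
set x := fun c : 'I_m => `|1 - 2 * ((#|approvers E c|)%:R / (n%:R : rat))|.
have hav : av_agr E = (m%:R)^-1 * \sum_(c < m) x c by [].
split.
- have step1 : av_agr E = 1 <-> forall c, x c = 1.
    rewrite hav; split.
    + move=> h.
      have hs : \sum_(c < m) (1 - x c) = 0.
        rewrite sumrB sumr_const card_ord.
        have := congr1 (fun y => m%:R * y) h; rewrite /= mulrA mulfV // mul1r mulr1.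
        by move=> ->; rewrite subrr.
      have hp : forall i : 'I_m, true -> 0 <= 1 - x i.
        by move=> i _; have /andP[_ h1] := x_bounds E i hn; rewrite subr_ge0.
      move=> c; have := psumr_eq0P hp hs (i:=c) isT.
      by move=> /eqP; rewrite subr_eq0 => /eqP <-.
    + move=> h; rewrite (eq_bigr (fun _ => 1)); last by move=> i _; apply: h.
      by rewrite sumr_const card_ord mulVf.
  rewrite step1; split.
  + move=> h v w; apply/ffunP => c.
    have [h0|hN] := (x_eq1 E c hn).1 (h c).
    * have := cards0_eq h0 => /setP hs.
      have := hs v; have := hs w; rewrite !inE.
      by do 2 move/negbT/negbTE ->.
    * have hC : #|~: approvers E c| = 0%N.
        by have := cardsC (approvers E c); rewrite hN card_ord; lia.
      have := cards0_eq hC => /setP hs.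
      have := hs v; have := hs w; rewrite !inE.
      by do 2 move/negbT/negbNE ->.
  + move=> h c; apply/(x_eq1 E c hn).
    have v0 : 'I_n := Ordinal hn.
    case hc: (E v0 c).
    * right; have -> : approvers E c = setT.
        by apply/setP => v; rewrite !inE (h v v0) hc.
      by rewrite cardsT card_ord.
    * left; apply/eqP; rewrite cards_eq0; apply/eqP; apply/setP => v.
      by rewrite !inE (h v v0) hc.
- rewrite hav; split.
  + move=> h c; apply/(x_eq0 E c hn).
    have hs : \sum_(c < m) x c = 0.
      have := congr1 (fun y => m%:R * y) h; rewrite /= mulrA mulfV // mul1r mulr0.
      by [].
    have hp : forall i : 'I_m, true -> 0 <= x i.
      by move=> i _; have /andP[] := x_bounds E i hn.
    exact: (psumr_eq0P hp hs (i:=c) isT).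
  + move=> h; rewrite big1 ?mulr0 // => c _; exact/(x_eq0 E c hn).
Qed.
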